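(* Let $\gamma:[0,1]\to\mathbb{R}$ be of class $C^3$ on $(0,1]$ and $C^2$ on $[0,1]$, with $\gamma(0)=\gamma'(0)=\gamma''(0)=0$, $\gamma''$ nonnegative and strictly increasing on $[0,1]$, and such that $b=\lim_{t\to0+}\gamma''(t)/(t\gamma'''(t))$ exists in $[0,\infty)$. Let $h(t)=t^2\gamma''(t)$ for $t\in[0,1]$. Then: (i) if $0\le s\le\gamma(1)$, then $s\le h(1)$ and $h^{-1}(s)\le\gamma^{-1}(s)$; (ii) if $0\le s\le h(1/3)$, then $s\le\gamma(1)$ and $\gamma^{-1}(s)\le 3h^{-1}(s)$.
   Context: $h^{-1}$ and $\gamma^{-1}$ denote the inverses of the increasing functions $h$ and $\gamma$ on $[0,1]$. *)

(* Defs.v *)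
From Stdlib Require Import Reals Lra ClassicalEpsilon.
From Coquelicot Require Import Coquelicot.
Open Scope R_scope.

Definition I01 (t : R) : Prop := 0 <= t <= 1.
Definition I01oc (t : R) : Prop := 0 < t <= 1.

Definition has_deriv_within (D : R -> Prop) (f : R -> R) (x l : R) : Prop :=
  filterlim (fun y => (f y - f x) / (y - x))
    (within (fun y => D y /\ y <> x) (locally x)) (locally l).

Definition cont_within (D : R -> Prop) (f : R -> R) (x : R) : Prop :=
  filterlim f (within D (locally x)) (locally (f x)).

(* The inverse on [0,1] of a function f: a point t in [0,1] with f t = s
   (unique when f is strictly increasing on [0,1]); default value otherwise. *)
Definition inv01 (f : R -> R) (s : R) : R :=
  epsilon (inhabits 0) (fun t => I01 t /\ f t = s).

(* Main.v *)
Require Import Defs.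
From Stdlib Require Import Reals Lra ClassicalEpsilon.
From Coquelicot Require Import Coquelicot.
Open Scope R_scope.

Definition D1 (D : R -> Prop) (f : R -> R) (x l : R) : Prop :=
  forall eps, 0 < eps -> exists d, 0 < d /\ forall y, D y -> y <> x -> Rabs (y - x) < d ->
    Rabs ((f y - f x) / (y - x) - l) < eps.
Definition C1 (D : R -> Prop) (f : R -> R) (x : R) : Prop :=
  forall eps, 0 < eps -> exists d, 0 < d /\ forall y, D y -> Rabs (y - x) < d ->
    Rabs (f y - f x) < eps.

Lemma hdw_D1 D f x l : has_deriv_within D f x l -> D1 D f x l.
Proof.
  intros H eps He.
  assert (HB : locally l (ball l (mkposreal eps He))) by apply locally_ball.
  specialize (H _ HB). destruct H as [[d Hd] Hd'].
  exists d; split; [exact Hd|].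
  intros y Dy Hy Hyd. apply (Hd' y); [exact Hyd | split; auto].
Qed.

Lemma cw_C1 D f x : cont_within D f x -> C1 D f x.
Proof.
  intros H eps He.
  assert (HB : locally (f x) (ball (f x) (mkposreal eps He))) by apply locally_ball.
  specialize (H _ HB). destruct H as [[d Hd] Hd'].
  exists d; split; [exact Hd|].
  intros y Dy Hyd. apply (Hd' y); auto.
Qed.

Lemma D1_int D f x l : (forall y, 0 < y < 1 -> D y) -> 0 < x < 1 -> D1 D f x l ->
  derivable_pt_lim f x l.
Proof.
  intros HD Hx H eps He. destruct (H eps He) as [d [Hd Hd']].
  assert (Hp : 0 < Rmin d (Rmin x (1 - x))).
  { apply Rmin_pos; [lra| apply Rmin_pos; lra]. }
  exists (mkposreal _ Hp). intros h Hh Hhd. simpl in Hhd.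
  assert (H1 := Rmin_l d (Rmin x (1-x))).
  assert (H2 := Rmin_r d (Rmin x (1-x))).
  assert (H3 := Rmin_l x (1-x)). assert (H4 := Rmin_r x (1-x)).
  assert (Ha : Rabs h < d) by lra.
  assert (Hb : - x < h < 1 - x) by (apply Rabs_def2 in Hhd; lra).
  specialize (Hd' (x + h)).
  replace (x + h - x) with h in Hd' by ring.
  apply Hd'; [apply HD; lra | lra | exact Ha].
Qed.

Lemma D1_C1 D f x l : D1 D f x l -> C1 D f x.
Proof.
  intros H eps He. destruct (H 1 Rlt_0_1) as [d [Hd Hd']].
  assert (Hk : 0 < Rabs l + 1) by (pose proof (Rabs_pos l); lra).
  assert (Hp : 0 < Rmin d (eps / (Rabs l + 1))).
  { apply Rmin_pos; [lra| apply Rdiv_lt_0_compat; lra]. }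
  exists (Rmin d (eps / (Rabs l + 1))). split; [exact Hp|].
  intros y Dy Hy.
  assert (H1 := Rmin_l d (eps / (Rabs l + 1))).
  assert (H2 := Rmin_r d (eps / (Rabs l + 1))).
  destruct (Req_dec y x) as [->|Hne].
  { rewrite Rminus_eq_0, Rabs_R0; lra. }
  specialize (Hd' y Dy Hne ltac:(lra)).
  set (q := (f y - f x) / (y - x)) in *.
  assert (Eq : f y - f x = q * (y - x)) by (unfold q; field; lra).
  rewrite Eq, Rabs_mult.
  assert (Hq : Rabs q < Rabs l + 1).
  { pose proof (Rabs_triang (q - l) l) as T. replace (q - l + l) with q in T by ring. lra. }
  assert (Hy2 : Rabs (y - x) * (Rabs l + 1) < eps).
  { apply Rmult_lt_reg_r with (/ (Rabs l + 1)).
    - apply Rinv_0_lt_compat; lra.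
    - rewrite Rmult_assoc, Rinv_r by lra. unfold Rdiv in H2. lra. }
  pose proof (Rabs_pos q). pose proof (Rabs_pos (y - x)). nra.
Qed.

Lemma poly_D1 D k x m : derivable_pt_lim k x m -> D1 D k x m.
Proof.
  intros H eps He. destruct (H eps He) as [d Hd].
  exists d. split; [apply cond_pos|]. intros y _ Hne Hy.
  specialize (Hd (y - x) ltac:(lra) Hy). replace (x + (y - x)) with y in Hd by ring. exact Hd.
Qed.

Lemma D1_sub D f k x l m : D1 D f x l -> D1 D k x m -> D1 D (fun u => f u - k u) x (l - m).
Proof.
  intros Hf Hk eps He.
  destruct (Hf (eps/2) ltac:(lra)) as [d1 [Hd1 H1]].
  destruct (Hk (eps/2) ltac:(lra)) as [d2 [Hd2 H2]].
  exists (Rmin d1 d2). split; [apply Rmin_pos; lra|].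
  intros y Dy Hne Hy.
  assert (A1 := Rmin_l d1 d2). assert (A2 := Rmin_r d1 d2).
  specialize (H1 y Dy Hne ltac:(lra)). specialize (H2 y Dy Hne ltac:(lra)).
  replace ((f y - k y - (f x - k x)) / (y - x) - (l - m)) with
    (((f y - f x) / (y - x) - l) - ((k y - k x) / (y - x) - m)) by (field; lra).
  pose proof (Rabs_triang ((f y - f x) / (y - x) - l) (- ((k y - k x) / (y - x) - m))) as T.
  rewrite Rabs_Ropp in T. unfold Rminus at 1. lra.
Qed.

Lemma I01_int y : 0 < y < 1 -> I01 y.
Proof. unfold I01; lra. Qed.

Lemma mvt_in f df a b : 0 < a -> a < b -> b < 1 ->
  (forall x, a <= x <= b -> D1 I01 f x (df x)) ->
  exists c, f b - f a = df c * (b - a) /\ a < c < b.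
Proof.
  intros Ha Hab Hb H. apply MVT_cor2; [exact Hab|].
  intros c Hc. apply (D1_int I01); [exact I01_int | lra | apply H; lra].
Qed.

Lemma mono f df a b : 0 <= a -> a <= b -> b <= 1 ->
  (forall x, a <= x <= b -> D1 I01 f x (df x)) ->
  (forall x, a < x < b -> 0 <= df x) -> f a <= f b.
Proof.
  intros Ha Hab Hb H Hp. destruct (Req_dec a b) as [->|Hne]; [lra|].
  apply Rnot_lt_le. intro Hlt. set (de := f a - f b).
  assert (Hde : 0 < de / 3) by (unfold de; lra).
  destruct (D1_C1 _ _ _ _ (H a ltac:(lra)) _ Hde) as [da [Hda Ca]].
  destruct (D1_C1 _ _ _ _ (H b ltac:(lra)) _ Hde) as [db [Hdb Cb]].
  set (m := Rmin (Rmin da db) (b - a)).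
  assert (M1 : m <= da /\ m <= db /\ m <= b - a /\ 0 < m).
  { unfold m. pose proof (Rmin_l (Rmin da db) (b-a)). pose proof (Rmin_r (Rmin da db) (b-a)).
    pose proof (Rmin_l da db). pose proof (Rmin_r da db).
    split; [lra|split;[lra|split;[lra|]]]. apply Rmin_pos; [apply Rmin_pos|]; lra. }
  specialize (Ca (a + m/3) ltac:(unfold I01; lra) ltac:(rewrite Rabs_right; lra)).
  specialize (Cb (b - m/3) ltac:(unfold I01; lra) ltac:(rewrite Rabs_left; lra)).
  destruct (mvt_in f df (a + m/3) (b - m/3)) as [c [Hc1 Hc2]]; try lra.
  { intros x Hx; apply H; lra. }
  assert (0 <= df c) by (apply Hp; lra).
  apply Rabs_def2 in Ca. apply Rabs_def2 in Cb.
  assert (0 <= df c * (b - m / 3 - (a + m / 3))) by (apply Rmult_le_pos; lra).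
  unfold de in *. lra.
Qed.

Lemma strict f df a b : 0 <= a -> a < b -> b <= 1 ->
  (forall x, a <= x <= b -> D1 I01 f x (df x)) ->
  (forall x, a < x < b -> 0 < df x) -> f a < f b.
Proof.
  intros Ha Hab Hb H Hp.
  set (a' := a + (b - a)/3). set (b' := b - (b-a)/3).
  assert (f a <= f a') by (apply (mono f df); unfold a'; try lra;
    [intros; apply H; lra | intros; apply Rlt_le, Hp; lra]).
  assert (f b' <= f b) by (apply (mono f df); unfold b'; try lra;
    [intros; apply H; lra | intros; apply Rlt_le, Hp; lra]).
  destruct (mvt_in f df a' b') as [c [Hc1 Hc2]]; unfold a', b' in *; try lra.
  { intros x Hx; apply H; lra. }
  assert (0 < df c) by (apply Hp; lra).
  assert (0 < df c * (b - (b - a) / 3 - (a + (b - a) / 3))) by (apply Rmult_lt_0_compat; lra).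
  lra.
Qed.

Lemma ivt f s : (forall x, 0 < x < 1 -> continuity_pt f x) ->
  (forall eps, 0 < eps -> exists a, 0 < a < 1/2 /\ f a < f 0 + eps) ->
  (forall eps, 0 < eps -> exists b, 1/2 < b < 1 /\ f 1 - eps < f b) ->
  f 0 <= s <= f 1 -> exists t, I01 t /\ f t = s.
Proof.
  intros Hc H0 H1 Hs.
  destruct (Req_dec s (f 0)) as [->|N0]; [exists 0; split; [unfold I01; lra|auto]|].
  destruct (Req_dec s (f 1)) as [->|N1]; [exists 1; split; [unfold I01; lra|auto]|].
  destruct (H0 (s - f 0) ltac:(lra)) as [a [Ha Fa]].
  destruct (H1 (f 1 - s) ltac:(lra)) as [b [Hb Fb]].
  destruct (Ranalysis5.IVT_interv (fun u => f u - s) a b) as [z [Hz Fz]].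
  - intros x Hx. apply continuity_pt_minus; [apply Hc; lra| apply continuity_pt_const; intros u v; reflexivity].
  - lra.
  - lra.
  - lra.
  - exists z. split; [unfold I01; lra| lra].
Qed.

Lemma C1_left f : C1 I01 f 0 ->
  (forall eps, 0 < eps -> exists a, 0 < a < 1/2 /\ f a < f 0 + eps).
Proof.
  intros C eps He. destruct (C eps He) as [d [Hd Hd']].
  set (a := Rmin d (1/2) / 2).
  assert (0 < a <= d/2 /\ a <= 1/4).
  { unfold a. pose proof (Rmin_l d (1/2)). pose proof (Rmin_r d (1/2)).
    assert (0 < Rmin d (1/2)) by (apply Rmin_pos; lra). lra. }
  exists a. split; [lra|].
  specialize (Hd' a ltac:(unfold I01; lra) ltac:(rewrite Rminus_0_r, Rabs_right; lra)).
  apply Rabs_def2 in Hd'. lra.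
Qed.

Lemma C1_right f : C1 I01 f 1 ->
  (forall eps, 0 < eps -> exists b, 1/2 < b < 1 /\ f 1 - eps < f b).
Proof.
  intros C eps He. destruct (C eps He) as [d [Hd Hd']].
  set (a := Rmin d (1/2) / 2).
  assert (0 < a <= d/2 /\ a <= 1/4).
  { unfold a. pose proof (Rmin_l d (1/2)). pose proof (Rmin_r d (1/2)).
    assert (0 < Rmin d (1/2)) by (apply Rmin_pos; lra). lra. }
  exists (1 - a). split; [lra|].
  specialize (Hd' (1 - a) ltac:(unfold I01; lra) ltac:(rewrite Rabs_left; lra)).
  apply Rabs_def2 in Hd'. lra.
Qed.

Lemma D1_cont D f x l : (forall y, 0 < y < 1 -> D y) -> 0 < x < 1 -> D1 D f x l -> continuity_pt f x.
Proof.
  intros HD Hx H. apply derivable_continuous_pt. exists l. exact (D1_int D f x l HD Hx H).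
Qed.

Lemma dlin c t x : derivable_pt_lim (fun u => c * (u - t)) x c.
Proof. apply is_derive_Reals. auto_derive; auto; ring. Qed.
Lemma dquad c t x : derivable_pt_lim (fun u => c * (u - t)^2 / 2) x (c * (x - t)).
Proof. apply is_derive_Reals. auto_derive; auto; field. Qed.

Lemma inv_spec f s : (exists t, I01 t /\ f t = s) -> I01 (inv01 f s) /\ f (inv01 f s) = s.
Proof. intros H. unfold inv01. apply (epsilon_spec (inhabits 0) (fun t => I01 t /\ f t = s)). exact H. Qed.

Theorem lemma4p3 (g g1 g2 g3 : R -> R)
  (Hg1 : forall t, I01 t -> has_deriv_within I01 g t (g1 t))
  (Hg2 : forall t, I01 t -> has_deriv_within I01 g1 t (g2 t))
  (Hg2c : forall t, I01 t -> cont_within I01 g2 t)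
  (Hg3 : forall t, I01oc t -> has_deriv_within I01oc g2 t (g3 t))
  (Hg3c : forall t, I01oc t -> cont_within I01oc g3 t)
  (H0 : g 0 = 0) (H10 : g1 0 = 0) (H20 : g2 0 = 0)
  (Hnn : forall t, I01 t -> 0 <= g2 t)
  (Hinc : forall x y, 0 <= x -> x < y -> y <= 1 -> g2 x < g2 y)
  (Hb : exists b : R, 0 <= b /\
          at_right 0 (fun t => t * g3 t <> 0) /\
          filterlim (fun t => g2 t / (t * g3 t)) (at_right 0) (locally b)) :
  let h := fun t => t ^ 2 * g2 t in
  (forall s, 0 <= s <= g 1 -> s <= h 1 /\ inv01 h s <= inv01 g s) /\
  (forall s, 0 <= s <= h (1/3) -> s <= g 1 /\ inv01 g s <= 3 * inv01 h s).
Proof.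
  intros h.
  assert (G1 : forall x, I01 x -> D1 I01 g x (g1 x)) by (intros; apply hdw_D1; auto).
  assert (G2 : forall x, I01 x -> D1 I01 g1 x (g2 x)) by (intros; apply hdw_D1; auto).
  assert (g2pos : forall x, 0 < x <= 1 -> 0 < g2 x).
  { intros x Hx. rewrite <- H20. apply Hinc; lra. }
  assert (g1inc : forall x y, 0 <= x -> x < y -> y <= 1 -> g1 x < g1 y).
  { intros x y Hx Hxy Hy. apply (strict g1 g2); auto.
    - intros u Hu; apply G2; unfold I01; lra.
    - intros u Hu; apply g2pos; lra. }
  assert (g1pos : forall x, 0 < x <= 1 -> 0 < g1 x).
  { intros x Hx. rewrite <- H10. apply g1inc; lra. }
  assert (ginc : forall x y, 0 <= x -> x < y -> y <= 1 -> g x < g y).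
  { intros x y Hx Hxy Hy. apply (strict g g1); auto.
    - intros u Hu; apply G1; unfold I01; lra.
    - intros u Hu; apply g1pos; lra. }
  assert (gle : forall x y, 0 <= x -> x <= y -> y <= 1 -> g x <= g y).
  { intros x y Hx Hxy Hy. destruct (Req_dec x y) as [->|]; [lra|]. apply Rlt_le, ginc; lra. }
  assert (hinc : forall x y, 0 <= x -> x < y -> y <= 1 -> h x < h y).
  { intros x y Hx Hxy Hy. unfold h. assert (A := Hinc x y Hx Hxy Hy).
    assert (B := Hnn x ltac:(unfold I01; lra)). simpl.
    assert (C1' : x * x * g2 x <= x * x * g2 y) by (apply Rmult_le_compat_l; nra).
    assert (C2' : x * x * g2 y < y * y * g2 y) by (apply Rmult_lt_compat_r; nra).
    nra. }
  assert (S3 : forall t, I01 t -> g t <= h t).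
  { intros t Ht. unfold I01 in Ht. set (c := g2 t).
    assert (Hc : 0 <= c) by (apply Hnn; unfold I01; lra).
    assert (Psi : forall u, 0 <= u <= t -> g1 u <= c * u).
    { intros u Hu.
      assert (M := mono (fun u => c * (u - 0) - g1 u) (fun u => c - g2 u) 0 u).
      simpl in M. rewrite H10 in M.
      assert (c * (0 - 0) - 0 <= c * (u - 0) - g1 u); [|lra].
      apply M; try lra.
      - intros x Hx. apply (D1_sub I01 (fun u => c * (u - 0)) g1 x c (g2 x)).
        + apply poly_D1, dlin.
        + apply G2; unfold I01; lra.
      - intros x Hx. assert (g2 x <= c); [|lra].
        unfold c. apply Rlt_le, Hinc; lra. }
    assert (M := mono (fun u => c * (u - 0)^2/2 - g u) (fun u => c * (u - 0) - g1 u) 0 t).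
    simpl in M. rewrite H0 in M.
    assert (c * ((0 - 0) * ((0 - 0) * 1)) / 2 - 0 <= c * ((t - 0) * ((t - 0) * 1)) / 2 - g t).
    { apply M; try lra.
      - intros x Hx. apply (D1_sub I01 (fun u => c * (u - 0)^2/2) g x (c * (x - 0)) (g1 x)).
        + apply poly_D1, dquad.
        + apply G1; unfold I01; lra.
      - intros x Hx. assert (g1 x <= c * x) by (apply Psi; lra). lra. }
    unfold h. fold c. simpl. nra. }
  assert (S4 : forall t, 0 <= t <= 1/3 -> h t <= g (3 * t)).
  { intros t Ht. set (c := g2 t).
    assert (Hc : 0 <= c) by (apply Hnn; unfold I01; lra).
    assert (Psi : forall u, t <= u <= 3 * t -> c * (u - t) <= g1 u).
    { intros u Hu.
      assert (M := mono (fun u => g1 u - c * (u - t)) (fun u => g2 u - c) t u).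
      simpl in M.
      assert (0 <= g1 t) by (destruct (Req_dec t 0) as [->|]; [lra| apply Rlt_le, g1pos; lra]).
      assert (g1 t - c * (t - t) <= g1 u - c * (u - t)); [|lra].
      apply M; try lra.
      - intros x Hx. apply (D1_sub I01 g1 (fun u => c * (u - t)) x (g2 x) c).
        + apply G2; unfold I01; lra.
        + apply poly_D1, dlin.
      - intros x Hx. assert (c <= g2 x); [|lra].
        unfold c. apply Rlt_le, Hinc; lra. }
    assert (M := mono (fun u => g u - c * (u - t)^2/2) (fun u => g1 u - c * (u - t)) t (3*t)).
    simpl in M.
    assert (g t - c * ((t - t) * ((t - t) * 1)) / 2 <= g (3*t) - c * ((3*t - t) * ((3*t - t) * 1)) / 2).
    { apply M; try lra.
      - intros x Hx. apply (D1_sub I01 g (fun u => c * (u - t)^2/2) x (g1 x) (c * (x - t))).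
        + apply G1; unfold I01; lra.
        + apply poly_D1, dquad.
      - intros x Hx. assert (c * (x - t) <= g1 x) by (apply Psi; lra). lra. }
    assert (0 <= g t) by (rewrite <- H0; apply gle; lra).
    unfold h. fold c. simpl. nra. }
  assert (Eg : forall s, 0 <= s <= g 1 -> exists t, I01 t /\ g t = s).
  { intros s Hs. apply ivt.
    - intros x Hx. apply (D1_cont I01 g x (g1 x)); [exact I01_int|exact Hx|apply G1; unfold I01; lra].
    - apply C1_left. apply (D1_C1 _ _ _ (g1 0)). apply G1; unfold I01; lra.
    - apply C1_right. apply (D1_C1 _ _ _ (g1 1)). apply G1; unfold I01; lra.
    - lra. }
  assert (h0 : h 0 = 0) by (unfold h; simpl; ring).
  assert (Eh : forall s, 0 <= s <= h 1 -> exists t, I01 t /\ h t = s).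
  { intros s Hs. apply ivt.
    - intros x Hx. unfold h.
      assert (continuity_pt g2 x).
      { apply (D1_cont I01oc g2 x (g3 x)); [intros y Hy; unfold I01oc; lra|exact Hx|].
        apply hdw_D1, Hg3; unfold I01oc; lra. }
      apply (continuity_pt_mult (fun t => t ^ 2) g2); [|assumption].
      apply derivable_continuous_pt. exists (2 * x ^ 1).
      apply is_derive_Reals. auto_derive; auto; ring.
    - intros eps He. set (K := g2 1 + 1).
      assert (HK : 0 <= g2 1) by (apply Hnn; unfold I01; lra).
      set (a := Rmin (1/4) (eps / K)).
      assert (A1 : 0 < a <= 1/4).
      { unfold a. split; [apply Rmin_pos; [lra| apply Rdiv_lt_0_compat; unfold K; lra]|apply Rmin_l]. }
      assert (A2 : a * K <= eps).
      { assert (a <= eps / K) by apply Rmin_r.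
        apply Rmult_le_reg_r with (/ K); [apply Rinv_0_lt_compat; unfold K; lra|].
        rewrite Rmult_assoc, Rinv_r by (unfold K; lra). unfold Rdiv in H. lra. }
      exists a. split; [lra|]. rewrite h0. unfold h. simpl.
      assert (g2 a <= g2 1) by (apply Rlt_le, Hinc; lra).
      assert (0 <= g2 a) by (apply Hnn; unfold I01; lra).
      unfold K in A2. nra.
    - intros eps He. destruct (cw_C1 _ _ _ (Hg2c 1 ltac:(unfold I01; lra)) (eps/2) ltac:(lra)) as [d [Hd C]].
      set (G := g2 1).
      assert (HG : 0 <= G) by (apply Hnn; unfold I01; lra).
      set (m := Rmin (Rmin d (1/2)) (eps / (2 * (G + 1))) / 2).
      assert (A1 : 0 < m <= 1/4 /\ m < d).
      { unfold m. pose proof (Rmin_l (Rmin d (1/2)) (eps / (2 * (G + 1)))).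
        pose proof (Rmin_l d (1/2)). pose proof (Rmin_r d (1/2)).
        assert (0 < Rmin (Rmin d (1/2)) (eps / (2 * (G + 1)))).
        { apply Rmin_pos; [apply Rmin_pos; lra| apply Rdiv_lt_0_compat; lra]. }
        lra. }
      assert (A2 : m * (2 * (G + 1)) <= eps / 2).
      { assert (2 * m <= eps / (2 * (G + 1))) by (unfold m; pose proof (Rmin_r (Rmin d (1/2)) (eps / (2 * (G + 1)))); lra).
        apply Rmult_le_reg_r with (/ (2 * (G + 1))); [apply Rinv_0_lt_compat; lra|].
        rewrite Rmult_assoc, Rinv_r by lra. unfold Rdiv in H |- *. lra. }
      exists (1 - m). split; [lra|].
      specialize (C (1 - m) ltac:(unfold I01; lra) ltac:(rewrite Rabs_left; lra)).
      apply Rabs_def2 in C. fold G in C.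
      assert (0 <= g2 (1 - m)) by (apply Hnn; unfold I01; lra).
      unfold h. simpl. fold G.
      assert (Hb2 : 1 - 2 * m <= (1 - m) * ((1 - m) * 1)) by nra.
      destruct (Rle_lt_dec (G - eps/2) 0).
      + assert (0 <= (1 - m) * ((1 - m) * 1) * g2 (1 - m)).
        { apply Rmult_le_pos; [nra| lra]. }
        nra.
      + assert ((1 - 2 * m) * (G - eps/2) <= (1 - m) * ((1 - m) * 1) * g2 (1 - m)).
        { apply Rle_trans with ((1 - 2 * m) * g2 (1 - m)).
          - apply Rmult_le_compat_l; lra.
          - apply Rmult_le_compat_r; lra. }
        nra.
    - rewrite h0. lra. }
  split.
  - intros s Hs.
    assert (Hs1 : s <= h 1) by (assert (g 1 <= h 1) by (apply S3; unfold I01; lra); lra).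
    split; [exact Hs1|].
    destruct (inv_spec g s (Eg s Hs)) as [[Ia Ia'] Ga].
    destruct (inv_spec h s (Eh s ltac:(lra))) as [[Ic Ic'] Hc].
    apply Rnot_lt_le. intro Hlt.
    assert (h (inv01 g s) < h (inv01 h s)) by (apply hinc; lra).
    assert (g (inv01 g s) <= h (inv01 g s)) by (apply S3; unfold I01; lra).
    lra.
  - intros s Hs.
    assert (E1 : h (1/3) <= g 1).
    { replace 1 with (3 * (1/3)) at 2 by field. apply S4; lra. }
    assert (h (1/3) <= h 1) by (apply Rlt_le, hinc; lra).
    split; [lra|].
    destruct (inv_spec g s (Eg s ltac:(lra))) as [[Ia Ia'] Ga].
    destruct (inv_spec h s (Eh s ltac:(lra))) as [[Ic Ic'] Hc].
    assert (Hc3 : inv01 h s <= 1/3).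
    { apply Rnot_lt_le. intro Hlt. assert (h (1/3) < h (inv01 h s)) by (apply hinc; lra). lra. }
    apply Rnot_lt_le. intro Hlt.
    assert (g (3 * inv01 h s) < g (inv01 g s)) by (apply ginc; lra).
    assert (h (inv01 h s) <= g (3 * inv01 h s)) by (apply S4; lra).
    lra.
Qed.
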